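(* Let $D$ be a strong nonseparable digraph and let $(D_0,D_1,\ldots,D_k)$ be an ear decomposition of $D$. Let $i\in\{1,\ldots,k\}$ and let $P_{i-1}=(x_0,x_1,\ldots,x_{r-1},x_r)$ be the ear of $D_{i-1}$ in $D$ (so $D_i=D_{i-1}\cup P_{i-1}$), with $l(P_{i-1})\geq 2$. If $D_i$ has a kernel $N$ but $D_{i-1}$ has no kernel, then one of the following holds: (1) $x_0\notin N$, $x_r\in N$ and $l(P_{i-1})$ is odd; (2) $x_0,x_r\notin N$ and $l(P_{i-1})$ is even.
   Context: All digraphs are finite, without loops or multiple arcs. Paths and cycles are directed; the length $l(P)$ of a path $P$ is its number of arcs. A digraph is strong if for every ordered pair of vertices $x,y$ there is a directed path from $x$ to $y$; it is nonseparable if its underlying undirected graph is nonseparable (has no cut vertex). For a subdigraph $H$ of $D$, an ear of $H$ in $D$ is a directed path $(x_0,\ldots,x_r)$ in $D$ whose end vertices lie in $H$ and whose internal vertices do not lie in $H$. An ear decomposition of a nonseparable strong digraph $D$ is a sequence $(D_0,\ldots,D_k)$ of nonseparable strong subdigraphs of $D$ such that $D_0$ is a directed cycle, $D_{j+1}=D_j\cup P_j$ with $P_j$ an ear of $D_j$ in $D$ for each $j\in\{0,\ldots,k-1\}$, and $D_k=D$. A kernel of a digraph is a set $N$ of vertices that is independent (no arc between two of its vertices) and absorbent (every vertex not in $N$ has an out-neighbour in $N$). *)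

(* Defs.v *)
From mathcomp Require Import all_boot.
Set Implicit Arguments.
Unset Strict Implicit.
Unset Printing Implicit Defensive.

(* A digraph on a finite vertex universe T is a pair (V, A) with
   V : {set T} its vertex set and A : {set T * T} its arc set. *)

Section Digraphs.
Variable T : finType.

(* arcs lie inside the vertex set; no loops (multiple arcs are excluded
   automatically since A is a set of ordered pairs). *)
Definition digraph_wf (V : {set T}) (A : {set T * T}) : Prop :=
  forall a, a \in A -> [/\ a.1 \in V, a.2 \in V & a.1 != a.2].

Definition subdigraph (V' : {set T}) (A' : {set T * T})
  (V : {set T}) (A : {set T * T}) : Prop :=
  [/\ digraph_wf V' A', V' \subset V & A' \subset A].

Definition arc_rel (A : {set T * T}) : rel T := fun x y => (x, y) \in A.

Definition strong (V : {set T}) (A : {set T * T}) : Prop :=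
  forall x y, x \in V -> y \in V -> connect (arc_rel A) x y.

Definition und_rel (W : {set T}) (A : {set T * T}) : rel T :=
  fun x y => [&& x \in W, y \in W & ((x, y) \in A) || ((y, x) \in A)].

Definition und_connected (W : {set T}) (A : {set T * T}) : Prop :=
  forall x y, x \in W -> y \in W -> connect (und_rel W A) x y.

Definition nonseparable (V : {set T}) (A : {set T * T}) : Prop :=
  und_connected V A /\ forall v, v \in V -> und_connected (V :\ v) A.

Definition is_dicycle (V : {set T}) (A : {set T * T}) : Prop :=
  exists c : seq T, [/\ uniq c, 2 <= size c, V = [set x in c] &
    A = [set a | (a.1 \in c) && (next c a.1 == a.2)]].

Definition path_arcs (p : seq T) : {set T * T} :=
  [set a in zip p (behead p)].

Definition is_ear (VH : {set T}) (A : {set T * T}) (p : seq T) : Prop :=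
  exists (x0 : T) (s : seq T),
    [/\ p = x0 :: s, 1 <= size s, uniq p & path (arc_rel A) x0 s] /\
    [/\ x0 \in VH, last x0 s \in VH &
        all (fun x => x \notin VH) (behead (belast x0 s))].

Definition ear_decomposition (V : {set T}) (A : {set T * T}) (k : nat)
  (Vs : nat -> {set T}) (As : nat -> {set T * T}) (Ps : nat -> seq T) : Prop :=
  [/\ forall j, j <= k ->
        [/\ subdigraph (Vs j) (As j) V A, nonseparable (Vs j) (As j)
          & strong (Vs j) (As j)],
      is_dicycle (Vs 0) (As 0),
      forall j, j < k ->
        [/\ is_ear (Vs j) A (Ps j),
            Vs j.+1 = Vs j :|: [set x in Ps j] &
            As j.+1 = As j :|: path_arcs (Ps j)]
    & Vs k = V /\ As k = A].

Definition is_kernel (V : {set T}) (A : {set T * T}) (N : {set T}) : Prop :=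
  [/\ N \subset V,
      forall x y, x \in N -> y \in N -> (x, y) \notin A &
      forall x, x \in V -> x \notin N -> exists2 y, y \in N & (x, y) \in A].

End Digraphs.

(* Main.v *)
Require Import Defs.
From mathcomp Require Import all_boot.
Set Implicit Arguments.

Lemma nth_belast' (T : Type) (x0 y : T) (s : seq T) n :
  n < size s -> nth x0 (belast y s) n = nth x0 (y :: s) n.
Proof.
elim: s y n => [|z s IH] y [|n] //= H.
by rewrite IH.
Qed.

Lemma zip_arc (T : eqType) (x : T) (s : seq T) a b :
  uniq (x :: s) -> (a, b) \in zip (x :: s) s ->
  index a (x :: s) < size s /\ b = nth a s (index a (x :: s)).
Proof.
elim: s x => [|y s IH] x //= Hu.
rewrite in_cons => /orP [/eqP [-> ->]|H].
  by rewrite eqxx.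
move: Hu => /andP [Hx Hu].
have [Hi Hb] := IH y Hu H.
have Ha : a \in y :: s.
  by rewrite -index_mem /=; apply: ltn_trans Hi _.
have -> : (x == a) = false.
  by apply/negbTE; apply: contra Hx => /eqP ->.
by split.
Qed.

Lemma zip_nth_arc (T : eqType) (d x : T) (s : seq T) n :
  n < size s -> (nth d (x :: s) n, nth d s n) \in zip (x :: s) s.
Proof.
elim: s x n => [|y s IH] x [|n] //= H.
  by rewrite in_cons eqxx.
by rewrite in_cons (IH y n H) orbT.
Qed.

Theorem mainTheorem7 (T : finType) (V : {set T}) (A : {set (T * T)})
  (k : nat) (Vs : nat -> {set T}) (As : nat -> {set (T * T)})
  (Ps : nat -> seq T) (i : nat) (x0 : T) (s : seq T) (N : {set T}) :
  digraph_wf V A -> strong V A -> nonseparable V A ->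
  ear_decomposition V A k Vs As Ps ->
  1 <= i <= k ->
  Ps i.-1 = x0 :: s ->
  2 <= size s ->
  is_kernel (Vs i) (As i) N ->
  ~ (exists N' : {set T}, is_kernel (Vs i.-1) (As i.-1) N') ->
  (x0 \notin N /\ last x0 s \in N /\ odd (size s)) \/
  (x0 \notin N /\ last x0 s \notin N /\ ~~ odd (size s)).
Proof.
case: i => [|j] //.
move=> _ _ _ [Hall _ Hears _] /andP[_ jk] /= Hp Hs [NsubV Nind Nabs] Hnok.
have [[wfj _ _] _ _] := Hall j (ltnW jk).
have [Hear HV HA] := Hears j jk.
have [x0' [s' [[Hp' _ Hu _] [_ _ Hall']]]] := Hear.
move: Hp'; rewrite Hp => -[Ex Es]; subst x0' s'.
rewrite Hp in HV HA Hu.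
set X := fun n => nth x0 (x0 :: s) n.
have Hint : forall n, 0 < n < size s -> X n \notin Vs j.
  move=> n /andP[n0 ns].
  have := allP Hall' (X n); apply.
  have -> : X n = nth x0 (behead (belast x0 s)) n.-1.
    by rewrite nth_behead prednK // nth_belast'.
  apply: mem_nth; rewrite size_behead size_belast.
  by rewrite -(prednK n0) in ns; rewrite -ltnS (ltn_predK ns).
have HinVi : forall n, n <= size s -> X n \in Vs j.+1.
  by move=> n Hn; rewrite HV in_setU inE /X mem_nth ?orbT.
have Hout : forall n y, 0 < n < size s -> (X n, y) \in As j.+1 -> y = X n.+1.
  move=> n y Hn; rewrite HA in_setU => /orP[H|].
    by have [H1 _ _] := wfj _ H; rewrite /= in H1; move: (Hint n Hn); rewrite H1.
  rewrite /path_arcs inE /= => /(@zip_arc _ _ _ _ _ Hu) [_ ->].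
  move: Hn => /andP[_ Hn].
  rewrite index_uniq //=; last exact: ltnW.
  by apply: set_nth_default.
have Harc : forall n, n < size s -> (X n, X n.+1) \in As j.+1.
  by move=> n Hn; rewrite HA in_setU /path_arcs inE /= zip_nth_arc ?orbT.
have Hbase : (x0 \notin N) && (X 1 \in N).
  apply/negPn/negP => Hb; apply: Hnok; exists (N :&: Vs j); split.
  - exact: subsetIr.
  - move=> x y; rewrite !inE => /andP[xN _] /andP[yN _].
    apply: contra (Nind x y xN yN); rewrite HA in_setU => ->; by [].
  - move=> v vV; rewrite inE vV andbT => vN.
    have vVi : v \in Vs j.+1 by rewrite HV in_setU vV.
    have [y yN Hvy] := Nabs v vVi vN.
    move: Hvy; rewrite HA in_setU => /orP[H|H].
      by exists y => //; rewrite inE yN; have [_ -> _] := wfj _ H.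
    exfalso; move: H; rewrite /path_arcs inE /= => /(@zip_arc _ _ _ _ _ Hu) [Hlt Hy].
    have vp : v \in x0 :: s by rewrite -index_mem; apply: ltnW.
    have Hv := nth_index x0 vp.
    move: Hlt Hy Hv; case: (index v (x0 :: s)) => [|n] Hlt Hy Hv.
      apply: (negP Hb); rewrite /= in Hv; rewrite Hv vN /= /X /=.
      by rewrite (set_nth_default v) ?(ltn_trans _ Hs) // -Hy.
    by move: (Hint n.+1 Hlt); rewrite /X Hv vV.
have Hind : forall n, 0 < n <= size s -> (X n \in N) = odd n.
  elim=> [//|n IH] /andP[_ Hn].
  case: n IH Hn => [|n] IH Hn; first by case/andP: Hbase.
  have Hn' : 0 < n.+1 < size s by [].
  rewrite oddS -IH; last by rewrite /= ltnW.
  case E: (X n.+1 \in N).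
    apply/negbTE/negP => H2; have := Nind _ _ E H2.
    by rewrite Harc //; case/andP: Hn'.
  have [y yN Hy] := Nabs _ (HinVi _ (ltnW (proj2 (andP Hn')))) (negbT E).
  by rewrite (Hout _ _ Hn' Hy) in yN.
have Hl : last x0 s = X (size s) by rewrite (last_nth x0).
move/andP: Hbase => [H0 _].
have := Hind (size s); rewrite -Hl => ->; last by rewrite leqnn andbT; apply: leq_trans Hs.
by case: (odd (size s)); [left|right].
Qed.
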